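(* Let $b\in B$, $i\in I$, $m=\varphi_i(b)$, $j\ge0$, $\mu\in P$, and put $n=\langle h_i,\mu\rangle+m$. Assume $n\ge0$. Then $\tilde f_i^{\,n}$ restricts to a bijection $$\tilde f_i^{\,n}:\ \bigsqcup_{t=0}^m\mathcal P_j(\tilde f_i^tb,\mu+t\alpha_i)\ \longrightarrow\ \bigsqcup_{t=0}^m\mathcal P_j\bigl(\tilde f_i^tb,\ r_i(\mu+(m-t)\alpha_i)\bigr),$$ where $\tilde f_i$ acts on $B^{\otimes(j+1)}$ by the tensor product rule.
   Context: $\mathfrak g$ is an affine Kac–Moody algebra with index set $I$ ($0$ the special node), Cartan matrix $(a_{ij})$, simple coroots $h_i$, fundamental weights $\Lambda_i$, null root $\delta$. $P=\bigoplus_{i\in I}\mathbb Z\Lambda_i\oplus\mathbb Z\delta$, $P_{cl}=\bigoplus_{i\in I}\mathbb Z\Lambda_i$, $cl:P\to P_{cl}$ the projection killing $\delta$; simple roots $\alpha_i=\sum_ja_{ji}\Lambda_j+\delta_{i0}\delta\in P$; $r_i(\mu)=\mu-\langle h_i,\mu\rangle\alpha_i$. $B$ is a finite crystal with $wt:B\to P_{cl}$, Kashiwara operators $\tilde e_i,\tilde f_i$, $\varepsilon_i(b)=\max\{k:\tilde e_i^kb\ne0\}$, $\varphi_i(b)=\max\{k:\tilde f_i^kb\ne0\}$, $\varphi_i(b)-\varepsilon_i(b)=\langle h_i,wt\,b\rangle$, $wt(\tilde f_ib)=wt(b)-cl(\alpha_i)$. Tensor products: $wt$ is additive; $\tilde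 e_i(b_1\otimes b_2)=\tilde e_ib_1\otimes b_2$ if $\varphi_i(b_1)\ge\varepsilon_i(b_2)$ and $=b_1\otimes\tilde e_ib_2$ otherwise; $\tilde f_i(b_1\otimes b_2)=\tilde f_ib_1\otimes b_2$ if $\varphi_i(b_1)>\varepsilon_i(b_2)$ and $=b_1\otimes\tilde f_ib_2$ otherwise. For $j\ge0$, $b\in B$, $\mu\in P$: $\mathcal P_j(b,\mu)=\{b\otimes b_j\otimes\cdots\otimes b_1\in B^{\otimes(j+1)}:wt(b_j)+\cdots+wt(b_1)=cl(\mu)\}$. *)

(* Defs.v *)
From HB Require Import structures.
From mathcomp Require Import all_boot all_order all_algebra.
Set Implicit Arguments. Unset Strict Implicit. Unset Printing Implicit Defensive.
Import Order.TTheory GRing.Theory Num.Theory.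

Local Open Scope ring_scope.

Section Weights.
Variable I : finType.

(* P_cl = (+)_{i in I} Z Lambda_i : coefficient functions on the Lambda_i. *)
Definition Pcl := {ffun I -> int}.
(* P = P_cl (+) Z delta : (coefficients of the Lambda_j, coefficient of delta). *)
Definition P := (Pcl * int)%type.

Definition cl (mu : P) : Pcl := mu.1.
(* <h_i, Lambda_j> = delta_ij, <h_i, delta> = 0. *)
Definition pairing (i : I) (mu : P) : int := mu.1 i.

Definition addP (mu nu : P) : P := ([ffun j => mu.1 j + nu.1 j], mu.2 + nu.2).
Definition scaleP (k : int) (mu : P) : P := ([ffun j => k * mu.1 j], k * mu.2).
Definition subPcl (x y : Pcl) : Pcl := [ffun j => x j - y j].

(* alpha_i = sum_j a_{ji} Lambda_j + delta_{i0} delta ; i0 is the special node 0 *)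
Definition alpha (A : I -> I -> int) (i0 i : I) : P :=
  ([ffun j => A j i], if i == i0 then 1 else 0).

Definition refl (A : I -> I -> int) (i0 i : I) (mu : P) : P :=
  addP mu (scaleP (- pairing i mu) (alpha A i0 i)).

Definition is_GCM (A : I -> I -> int) : Prop :=
  [/\ forall i, A i i = 2,
      forall i j, i != j -> A i j <= 0 &
      forall i j, A i j = 0 <-> A j i = 0].

Definition indecomposable (A : I -> I -> int) : Prop :=
  forall J : {set I}, J != set0 -> J != setT ->
    exists j k, [/\ j \in J, k \notin J & A j k != 0].

(* Affine type (Kac, Thm 4.3): indecomposable GCM admitting u > 0 with A u = 0. *)
Definition affine_cartan (A : I -> I -> int) : Prop :=
  [/\ is_GCM A, indecomposable A &
      exists u : I -> int, (forall i, 0 < u i) /\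
        (forall i, \sum_(j : I) A i j * u j = 0)].

End Weights.

(* Crystals: a finite set with weight and Kashiwara operators (0 = None). *)
Record crystal (I : finType) := Crystal {
  ctype : finType;
  cwt : ctype -> Pcl I;
  ce : I -> ctype -> option ctype;
  cf : I -> ctype -> option ctype }.
Arguments cwt {I} c _.
Arguments ce {I} c _ _.
Arguments cf {I} c _ _.

Definition oiter (T : Type) (g : T -> option T) (k : nat) (x : T) : option T :=
  iter k (fun o => obind g o) (Some x).

Section CrystalDefs.
Variable I : finType.

(* eps_i(b) = max{k : e_i^k b <> 0}, phi_i(b) = max{k : f_i^k b <> 0}
   (k ranges up to #|B|, which is enough in a finite crystal). *)
Definition eps (C : crystal I) (i : I) (b : ctype C) : nat :=
  (\max_(k < #|{: ctype C}|.+1 | isSome (oiter (ce C i) k b)) k)%N.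
Definition phi (C : crystal I) (i : I) (b : ctype C) : nat :=
  (\max_(k < #|{: ctype C}|.+1 | isSome (oiter (cf C i) k b)) k)%N.

End CrystalDefs.
Arguments eps {I} C i b.
Arguments phi {I} C i b.

Section CrystalDefs2.
Variable I : finType.

Definition is_crystal (A : I -> I -> int) (i0 : I) (C : crystal I) : Prop :=
  [/\ forall i (b b' : ctype C), ce C i b = Some b' <-> cf C i b' = Some b,
      forall i (b : ctype C), (phi C i b)%:Z - (eps C i b)%:Z = cwt C b i &
      forall i (b b' : ctype C), cf C i b = Some b' ->
         cwt C b' = subPcl (cwt C b) (cl (alpha A i0 i))].

(* Tensor product with the (Kashiwara) tensor product rule. *)
Definition tensor (C1 C2 : crystal I) : crystal I :=
  @Crystal I (ctype C1 * ctype C2)%type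
    (fun x => [ffun j => cwt C1 x.1 j + cwt C2 x.2 j])
    (fun i x => if (eps C2 i x.2 <= phi C1 i x.1)%N
                then omap (fun y => (y, x.2)) (ce C1 i x.1)
                else omap (fun y => (x.1, y)) (ce C2 i x.2))
    (fun i x => if (eps C2 i x.2 < phi C1 i x.1)%N
                then omap (fun y => (y, x.2)) (cf C1 i x.1)
                else omap (fun y => (x.1, y)) (cf C2 i x.2)).

Definition unitC : crystal I :=
  @Crystal I unit (fun _ => [ffun=> 0]) (fun _ _ => None) (fun _ _ => None).

Fixpoint tailpow (B : crystal I) (j : nat) : crystal I :=
  match j with
  | O => unitC
  | j'.+1 => tensor B (tailpow B j')
  end.

(* B^{(x)(j+1)} : elements b (x) b_j (x) ... (x) b_1 *)
Definition tpow (B : crystal I) (j : nat) : crystal I := tensor B (tailpow B j).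

(* P_j(b, mu), where b is given as an option (None = 0 gives the empty set) *)
Definition Pj (B : crystal I) (j : nat) (ob : option (ctype B)) (mu : P I)
  : {set ctype (tpow B j)} :=
  [set x : ctype (tpow B j) | (Some x.1 == ob) && (cwt (tailpow B j) x.2 == cl mu)].

End CrystalDefs2.

(* Main.v *)
Require Import Defs.
From HB Require Import structures.
From mathcomp Require Import all_boot all_order all_algebra.
From mathcomp Require Import zify ring.
Import Order.TTheory GRing.Theory Num.Theory.
Local Open Scope ring_scope.

Section Gen.
Variable T : Type.
Implicit Types (g : T -> option T).

Lemma oiterS g k x : oiter g k.+1 x = obind g (oiter g k x).
Proof. by []. Qed.

Lemma oiterSr g k x : oiter g k.+1 x = obind (oiter g k) (g x).
Proof.
elim: k x => [|k IH] x; first by rewrite /=; case: (g x).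
by rewrite oiterS IH; case: (g x).
Qed.

Lemma oiterD g k l x : oiter g (k + l) x = obind (oiter g l) (oiter g k x).
Proof.
elim: k x => [|k IH] x; first by [].
by rewrite addSn !oiterSr; case: (g x).
Qed.

Lemma oiter_down g k l x : (l <= k)%N -> isSome (oiter g k x) -> isSome (oiter g l x).
Proof.
move=> lk; rewrite -(subnKC lk) oiterD; by case: (oiter g l x).
Qed.
End Gen.

Lemma max_spec (T : finType) (g : T -> option T) (w : T -> int) (c : int) :
  c != 0 -> (forall x y, g x = Some y -> w y = w x + c) ->
  forall x k, isSome (oiter g k x) =
     (k <= \max_(l < #|T|.+1 | isSome (oiter g l x)) l)%N.
Proof.
move=> c0 Hw x.
have Hit : forall k y, oiter g k x = Some y -> w y = w x + k%:Z * c.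
  elim=> [|k IH] y /=; first by case=> ->; rewrite mul0r addr0.
  rewrite -/(oiter g k x); case E: (oiter g k x) => [z|] //= /Hw ->.
  by rewrite (IH _ E) -addrA -{2}(mul1r c) -mulrDl -PoszD addn1.
have Hb : forall k, isSome (oiter g k x) -> (k < #|T|)%N.
  move=> k Hk.
  pose h (l : 'I_k.+1) := odflt x (oiter g l x).
  have hi : injective h.
    move=> l1 l2; rewrite /h.
    have := @oiter_down _ g k l1 x (ltnSE (ltn_ord l1)) Hk.
    have := @oiter_down _ g k l2 x (ltnSE (ltn_ord l2)) Hk.
    case E2: (oiter g l2 x) => [y2|] //; case E1: (oiter g l1 x) => [y1|] //= _ _ e.
    subst y2; have := Hit _ _ E1; rewrite (Hit _ _ E2) => /addrI /mulIf.
    by move=> /(_ c0) [] /val_inj.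
  by have := leq_card _ hi; rewrite card_ord.
move=> k; apply/idP/idP.
  move=> Hk; have Hk' := Hb _ Hk.
  have Hk2 : (k < #|T|.+1)%N by apply: ltnW.
  exact: (@leq_bigmax_cond _ (fun l : 'I_#|T|.+1 => isSome (oiter g l x)) (fun l => nat_of_ord l) (Ordinal Hk2)).
move=> Hk; apply: (@oiter_down _ g _ k x Hk).
apply: (big_ind (fun v => isSome (oiter g v x))) => //.
by move=> a b' Ha Hb'; rewrite /maxn; case: ltnP.
Qed.
Section Cry.
Variables (I : finType) (A : I -> I -> int) (i0 i : I).
Hypothesis Aii : A i i = 2.

Definition wstep (C : crystal I) :=
  forall b b', cf C i b = Some b' -> forall l, cwt C b' l = cwt C b l - A l i.
Definition inv (C : crystal I) :=
  forall b b', ce C i b = Some b' <-> cf C i b' = Some b.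
Definition goodi (C : crystal I) : Prop :=
  [/\ inv C, forall b, (phi C i b)%:Z - (eps C i b)%:Z = cwt C b i & wstep C].

Lemma phi_spec C : wstep C -> forall b k,
  isSome (oiter (cf C i) k b) = (k <= phi C i b)%N.
Proof.
move=> Hw b k; apply: (@max_spec _ _ (fun x => cwt C x i) (-2)) => // x y /Hw ->.
by rewrite Aii.
Qed.

Lemma eps_spec C : inv C -> wstep C -> forall b k,
  isSome (oiter (ce C i) k b) = (k <= eps C i b)%N.
Proof.
move=> Hi Hw b k; apply: (@max_spec _ _ (fun x => cwt C x i) 2) => // x y /Hi /Hw ->.
by rewrite Aii subrK.
Qed.

Lemma leq_ext (a c : nat) : (forall k, (k <= a) = (k <= c))%N -> a = c.
Proof. by move=> H; apply/eqP; rewrite eqn_leq -H leqnn H leqnn. Qed.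

Section G.
Variable C : crystal I.
Hypotheses (Hi : inv C) (Hw : wstep C).

Lemma phi_f x y : cf C i x = Some y -> (phi C i y + 1 = phi C i x)%N /\ (eps C i y = eps C i x + 1)%N.
Proof.
move=> E; split.
  have H : forall k, (k <= phi C i y)%N = (k + 1 <= phi C i x)%N.
    by move=> k; rewrite -!phi_spec // addn1 oiterSr E.
  have h1 := H (phi C i y); rewrite leqnn in h1.
  have h2 := H (phi C i x).-1.
  have : (0 < phi C i x)%N by rewrite -phi_spec // /= E.
  move=> p0; rewrite addn1 prednK // leqnn in h2. lia.
have E' : ce C i y = Some x by apply/Hi.
have H : forall k, (k + 1 <= eps C i y)%N = (k <= eps C i x)%N.
  by move=> k; rewrite -!eps_spec // addn1 oiterSr E'.
have h1 := H (eps C i x); rewrite leqnn in h1.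
have h2 := H (eps C i y).-1.
have : (0 < eps C i y)%N by rewrite -eps_spec // /= E'.
move=> p0; rewrite addn1 prednK // leqnn in h2. lia.
Qed.

Lemma phi_e x y : ce C i x = Some y -> (phi C i y = phi C i x + 1)%N /\ (eps C i y + 1 = eps C i x)%N.
Proof. by move=> /Hi /phi_f [-> ->]. Qed.

Lemma phi_fk k x y : oiter (cf C i) k x = Some y ->
  (phi C i y + k = phi C i x)%N /\ (eps C i y = eps C i x + k)%N.
Proof.
elim: k y => [|k IH] y /=; first by case=> ->; rewrite !addn0.
rewrite -/(oiter _ k x); case E: (oiter _ k x) => [z|] //= /phi_f [h1 h2].
case: (IH _ E) => h3 h4; lia.
Qed.

Lemma phi_ek k x y : oiter (ce C i) k x = Some y ->
  (phi C i y = phi C i x + k)%N /\ (eps C i y + k = eps C i x)%N.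
Proof.
elim: k y => [|k IH] y /=; first by case=> ->; rewrite !addn0.
rewrite -/(oiter _ k x); case E: (oiter _ k x) => [z|] //= /phi_e [h1 h2].
case: (IH _ E) => h3 h4; lia.
Qed.

Lemma inv_k k x z : oiter (cf C i) k x = Some z <-> oiter (ce C i) k z = Some x.
Proof.
elim: k x z => [|k IH] x z; first by split; case=> ->.
rewrite oiterSr oiterS; split.
  case E: (cf C i x) => [x'|] //= /IH ->; exact/Hi.
case E: (oiter _ k z) => [w|] //= /Hi E2; rewrite E2 /=; exact/IH.
Qed.

Lemma wt_fk k x y : oiter (cf C i) k x = Some y -> forall l, cwt C y l = cwt C x l - k%:Z * A l i.
Proof.
elim: k y => [|k IH] y /=; first by case=> -> l; rewrite mul0r subr0.
rewrite -/(oiter _ k x); case E: (oiter _ k x) => [z|] //= /Hw H l.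
rewrite H (IH _ E) intS; ring.
Qed.

Lemma wt_ek k x y : oiter (ce C i) k x = Some y -> forall l, cwt C y l = cwt C x l + k%:Z * A l i.
Proof. move=> /inv_k H l; rewrite (wt_fk _ _ _ H l); ring. Qed.
End G.
Arguments phi_f [C] Hi Hw [x y].
Arguments phi_e [C] Hi Hw [x y].
Arguments phi_fk [C] Hi Hw [k x y].
Arguments phi_ek [C] Hi Hw [k x y].
Arguments inv_k [C] Hi {k x z}.
Arguments wt_fk [C] Hw [k x y].
Arguments wt_ek [C] Hi Hw [k x y].
Section Tens.
Variables C1 C2 : crystal I.
Hypotheses (Hi1 : inv C1) (Hw1 : wstep C1) (Hi2 : inv C2) (Hw2 : wstep C2).
Let TC := tensor C1 C2.

Lemma tens_inv : inv TC.
Proof.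
move=> [x1 x2] [y1 y2] /=; split.
  case: (leqP (eps C2 i x2) (phi C1 i x1)) => h.
    case E: (ce C1 i x1) => [z|] //= [<- <-].
    have [p1 _] := phi_e Hi1 Hw1 E.
    have -> : (eps C2 i x2 < phi C1 i z)%N = true by lia.
    by have -> /= : cf C1 i z = Some x1 by apply/Hi1.
  case E: (ce C2 i x2) => [z|] //= [<- <-].
  have [_ p1] := phi_e Hi2 Hw2 E.
  have -> : (eps C2 i z < phi C1 i x1)%N = false by lia.
  by have -> /= : cf C2 i z = Some x2 by apply/Hi2.
case: (ltnP (eps C2 i y2) (phi C1 i y1)) => h.
  case E: (cf C1 i y1) => [z|] //= [<- <-].
  have [p1 _] := phi_f Hi1 Hw1 E.
  have -> : (eps C2 i y2 <= phi C1 i z)%N = true by lia.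
  by have -> /= : ce C1 i z = Some y1 by apply/Hi1.
case E: (cf C2 i y2) => [z|] //= [<- <-].
have [_ p1] := phi_f Hi2 Hw2 E.
have -> : (eps C2 i z <= phi C1 i y1)%N = false by lia.
by have -> /= : ce C2 i z = Some y2 by apply/Hi2.
Qed.

Lemma tens_wstep : wstep TC.
Proof.
move=> [x1 x2] [y1 y2] /=; case: (ltnP (eps C2 i x2) (phi C1 i x1)) => _.
  case E: (cf C1 i x1) => [z|] //= [<- <-] l; rewrite !ffunE (Hw1 _ _ E); ring.
case E: (cf C2 i x2) => [z|] //= [<- <-] l; rewrite !ffunE (Hw2 _ _ E); ring.
Qed.

Section F.
Variables (x1 : ctype C1) (x2 : ctype C2).
Let p := (phi C1 i x1 - eps C2 i x2)%N.
Let q := (eps C2 i x2 - phi C1 i x1)%N.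

Lemma tens_f1 k : (k <= p)%N ->
  oiter (cf TC i) k (x1, x2) = omap (fun y => (y, x2)) (oiter (cf C1 i) k x1).
Proof.
elim: k => [|k IH] hk //.
rewrite oiterS IH; last by lia.
have : (k <= phi C1 i x1)%N by lia.
rewrite -phi_spec // oiterS; case E: (oiter _ k x1) => [z|] //= _.
have [h1 _] := phi_fk Hi1 Hw1 E.
have -> : (eps C2 i x2 < phi C1 i z)%N = true by lia.
by case: (cf C1 i z).
Qed.

Lemma tens_f2 y1 : oiter (cf C1 i) p x1 = Some y1 -> forall k,
  oiter (cf TC i) (p + k) (x1, x2) = omap (fun y => (y1, y)) (oiter (cf C2 i) k x2).
Proof.
move=> Ey; elim=> [|k IH]; first by rewrite addn0 tens_f1 // Ey.
rewrite addnS !oiterS IH; case E: (oiter _ k x2) => [z|] //=.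
have [h1 _] := phi_fk Hi1 Hw1 Ey.
have [_ h2] := phi_fk Hi2 Hw2 E.
have -> : (eps C2 i z < phi C1 i y1)%N = false by lia.
by case: (cf C2 i z).
Qed.

Lemma tens_e1 k : (k <= q)%N ->
  oiter (ce TC i) k (x1, x2) = omap (fun y => (x1, y)) (oiter (ce C2 i) k x2).
Proof.
elim: k => [|k IH] hk //.
rewrite oiterS IH; last by lia.
have : (k <= eps C2 i x2)%N by lia.
rewrite -eps_spec // oiterS; case E: (oiter _ k x2) => [z|] //= _.
have [_ h1] := phi_ek Hi2 Hw2 E.
have -> : (eps C2 i z <= phi C1 i x1)%N = false by lia.
by case: (ce C2 i z).
Qed.

Lemma tens_e2 y2 : oiter (ce C2 i) q x2 = Some y2 -> forall k,
  oiter (ce TC i) (q + k) (x1, x2) = omap (fun y => (y, y2)) (oiter (ce C1 i) k x1).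
Proof.
move=> Ey; elim=> [|k IH]; first by rewrite addn0 tens_e1 // Ey.
rewrite addnS !oiterS IH; case E: (oiter _ k x1) => [z|] //=.
have [_ h1] := phi_ek Hi2 Hw2 Ey.
have [h2 _] := phi_ek Hi1 Hw1 E.
have -> : (eps C2 i y2 <= phi C1 i z)%N = true by lia.
by case: (ce C1 i z).
Qed.

Lemma tens_phi : phi TC i (x1, x2) = (p + phi C2 i x2)%N.
Proof.
have : isSome (oiter (cf C1 i) p x1) by rewrite phi_spec //; lia.
case Ey: (oiter _ p x1) => [y1|] // _.
apply: leq_ext => k; rewrite -phi_spec; last exact: tens_wstep.
case: (leqP k p) => hk.
  rewrite tens_f1 //; have : isSome (oiter (cf C1 i) k x1) by rewrite phi_spec //; lia.
  case: (oiter _ k x1) => //= _; symmetry; lia.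
rewrite -(subnKC (ltnW hk)) (@tens_f2 y1 Ey _) leq_add2l.
by rewrite -phi_spec //; case: (oiter _ _ x2).
Qed.

Lemma tens_eps : eps TC i (x1, x2) = (q + eps C1 i x1)%N.
Proof.
have : isSome (oiter (ce C2 i) q x2) by rewrite eps_spec //; lia.
case Ey: (oiter _ q x2) => [y2|] // _.
apply: leq_ext => k; rewrite -eps_spec; [|exact: tens_inv|exact: tens_wstep].
case: (leqP k q) => hk.
  rewrite tens_e1 //; have : isSome (oiter (ce C2 i) k x2) by rewrite eps_spec //; lia.
  case: (oiter _ k x2) => //= _; symmetry; lia.
rewrite -(subnKC (ltnW hk)) (@tens_e2 y2 Ey _) leq_add2l.
by rewrite -eps_spec //; case: (oiter _ _ x1).
Qed.
End F.
End Tens.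

Lemma tens_good C1 C2 : goodi C1 -> goodi C2 -> goodi (tensor C1 C2).
Proof.
move=> [Hi1 Hr1 Hw1] [Hi2 Hr2 Hw2]; split.
- exact: tens_inv.
- move=> [x1 x2]; rewrite tens_phi // tens_eps // /= ffunE -Hr1 -Hr2.
  lia.
- exact: tens_wstep.
Qed.

Lemma unit_good : goodi (unitC I).
Proof.
have Hw : wstep (unitC I) by [].
have Hi : inv (unitC I) by [].
have h0 : forall b, phi (unitC I) i b = 0%N.
  move=> b; have := @phi_spec (unitC I) Hw b 1; rewrite /=; case: (phi _ i b) => //.
have h1 : forall b, eps (unitC I) i b = 0%N.
  move=> b; have := @eps_spec (unitC I) Hi Hw b 1; rewrite /=; case: (eps _ i b) => //.
by split => // b; rewrite h0 h1 /= ffunE.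
Qed.

Lemma tail_good B : goodi B -> forall j, goodi (tailpow B j).
Proof. by move=> HB; elim=> [|j IH] /=; [exact: unit_good | exact: tens_good]. Qed.
End Cry.

Arguments tail_good {I A i} Aii B _ j.
Arguments tens_good {I A i} Aii {C1 C2} _ _.
Arguments tens_f1 {I A i} Aii {C1 C2} Hi1 Hw1 {x1 x2 k} _.
Arguments tens_f2 {I A i} Aii {C1 C2} Hi1 Hw1 Hi2 Hw2 {x1 x2 y1} _ k.
Arguments tens_e1 {I A i} Aii {C1 C2} Hi2 Hw2 {x1 x2 k} _.
Arguments tens_e2 {I A i} Aii {C1 C2} Hi1 Hw1 Hi2 Hw2 {x1 x2 y2} _ k.
Arguments phi_fk {I A i} Aii {C} Hi Hw {k x y} _.
Arguments inv_k {I i C} Hi {k x z}.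
Arguments wt_fk {I A i C} Hw {k x y} _ l.
Arguments wt_ek {I A i C} Hi Hw {k x y} _ l.
Arguments phi_spec {I A i} Aii {C} _ b k.
Arguments eps_spec {I A i} Aii {C} _ _ b k.

Theorem mainTheorem4 (I : finType) (A : I -> I -> int) (i0 : I)
  (HA : affine_cartan A) (B : crystal I) (HB : is_crystal A i0 B)
  (b : ctype B) (i : I) (m : nat) (Hm : m = phi B i b) (j : nat) (mu : P I)
  (n : nat) (Hn : n%:Z = pairing i mu + m%:Z) :
  let S := \bigcup_(t < m.+1)
             Pj j (oiter (cf B i) t b) (addP mu (scaleP t%:Z (alpha A i0 i))) in
  let T := \bigcup_(t < m.+1)
             Pj j (oiter (cf B i) t b)
                (refl A i0 i (addP mu (scaleP (m%:Z - t%:Z) (alpha A i0 i)))) in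
  let F := oiter (cf (tpow B j) i) n in
  [/\ forall x, x \in S -> exists2 y, F x = Some y & y \in T,
      forall x y, x \in S -> y \in S -> F x = F y -> x = y &
      forall y, y \in T -> exists2 x, x \in S & F x = Some y].
Proof.
move=> S T F; rewrite /pairing in Hn.
have Aii : A i i = 2 by case: HA => [[]].
have gB : @goodi I A i B.
  case: HB => h1 h2 h3; split; [exact: h1 i | exact: h2 i | move=> b1 b2 E l].
  by rewrite (h3 _ _ _ E) /subPcl /cl /alpha /= !ffunE.
have gR := tail_good Aii B gB j.
have gC : @goodi I A i (tpow B j) := tens_good Aii gB gR.
case: gB gR gC => [iB rB wB] [iR rR wR] [iC rC wC].
set R := tailpow B j in iR rR wR *.
have reflE : forall (t : nat) l,
    (refl A i0 i (addP mu (scaleP (m%:Z - t%:Z) (alpha A i0 i)))).1 l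
    = mu.1 l + (t%:Z - n%:Z) * A l i.
  move=> t l; rewrite /refl /addP /scaleP /pairing /alpha /= !ffunE /= Aii Hn.
  rewrite /pairing; ring.
have memS : forall x, x \in S <-> exists t, [/\ (t <= m)%N,
    oiter (cf B i) t b = Some x.1 & forall l, cwt R x.2 l = mu.1 l + t%:Z * A l i].
  move=> x; split.
    move=> /bigcupP [t _]; rewrite inE => /andP [/eqP E1 /eqP E2].
    exists t; split => //; first exact: (ltnSE (ltn_ord t)).
    by move=> l; rewrite E2 /cl /addP /scaleP /alpha /= !ffunE.
  move=> [t [ht E1 E2]]; apply/bigcupP; exists (Ordinal (ht : (t < m.+1)%N)) => //.
  rewrite inE /= E1 eqxx /=; apply/eqP/ffunP => l.
  by rewrite E2 /cl /addP /scaleP /alpha /= !ffunE.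
have memT : forall x, x \in T <-> exists t, [/\ (t <= m)%N,
    oiter (cf B i) t b = Some x.1 & forall l, cwt R x.2 l = mu.1 l + (t%:Z - n%:Z) * A l i].
  move=> x; split.
    move=> /bigcupP [t _]; rewrite inE => /andP [/eqP E1 /eqP E2].
    exists t; split => //; first exact: (ltnSE (ltn_ord t)).
    by move=> l; rewrite E2 /cl reflE.
  move=> [t [ht E1 E2]]; apply/bigcupP; exists (Ordinal (ht : (t < m.+1)%N)) => //.
  rewrite inE /= E1 eqxx /=; apply/eqP/ffunP => l.
  by rewrite E2 /cl reflE.
have P1 : forall x, x \in S -> exists2 y, F x = Some y & y \in T.
  move=> [a r] /memS [t [ht Ea Er]] /=.
  simpl in Ea, Er.
  have [pa _] := phi_fk Aii iB wB Ea.
  have wr := Er i; rewrite Aii in wr.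
  have rr := rR r.
  case: (leqP n (phi B i a - eps R i r)%N) => hnp.
    have : isSome (oiter (cf B i) n a) by rewrite (phi_spec Aii wB); lia.
    case Ea': (oiter _ n a) => [a'|] // _.
    exists (a', r).
      by rewrite /F /tpow (tens_f1 Aii iB wB hnp) Ea'.
    apply/memT; exists (t + n)%N; split => /=.
    - lia.
    - by rewrite oiterD Ea /= Ea'.
    - by move=> l; rewrite Er PoszD; ring.
  have : isSome (oiter (cf B i) (phi B i a - eps R i r)%N a)
    by rewrite (phi_spec Aii wB); lia.
  case Ea': (oiter _ _ a) => [a'|] // _.
  have : isSome (oiter (cf R i) (n - (phi B i a - eps R i r))%N r)
    by rewrite (phi_spec Aii wR); lia.
  case Er': (oiter _ _ r) => [r'|] // _.
  exists (a', r').
    rewrite /F /tpow -(subnKC (ltnW hnp)).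
    by rewrite (tens_f2 Aii iB wB iR wR Ea') Er'.
  apply/memT; exists (t + (phi B i a - eps R i r))%N; split => /=.
  - lia.
  - by rewrite oiterD Ea /= Ea'.
  - move=> l; rewrite (wt_fk wR Er' l) Er -subzn ?(ltnW hnp) // !PoszD; ring.
split => //.
  move=> x y xS yS E.
  have [z Ez _] := P1 x xS.
  have [z' Ez' _] := P1 y yS.
  have h1 := (inv_k iC).1 Ez.
  have h2 := (inv_k iC).1 Ez'.
  move: E; rewrite Ez Ez' => [[E]]; subst z'.
  by move: h1; rewrite h2 => [[]].
move=> [a' r'] /memT [t' [ht Ea Er]] /=.
simpl in Ea, Er.
have [pa _] := phi_fk Aii iB wB Ea.
have wr := Er i; rewrite Aii in wr.
have rr := rR r'.
case: (leqP n (eps R i r' - phi B i a')%N) => hnq.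
  have : isSome (oiter (ce R i) n r') by rewrite (eps_spec Aii iR wR); lia.
  case Er': (oiter _ n r') => [r''|] // _.
  exists (a', r'').
    apply/memS; exists t'; split => //= l.
    rewrite (wt_ek iR wR Er' l) Er; ring.
  apply/(inv_k iC).
  by rewrite /tpow (tens_e1 Aii iR wR hnq) Er'.
have : isSome (oiter (ce R i) (eps R i r' - phi B i a')%N r')
  by rewrite (eps_spec Aii iR wR); lia.
case Ez2: (oiter _ _ r') => [z2|] // _.
set s := (n - (eps R i r' - phi B i a'))%N.
have hs : (s <= t')%N by rewrite /s; lia.
have : isSome (oiter (cf B i) (t' - s)%N b).
  by apply: (@oiter_down _ (cf B i) t' (t' - s)%N b (leq_subr s t')); rewrite Ea.
case Ec: (oiter _ (t' - s)%N b) => [c|] // _.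
have Ecs : oiter (cf B i) s c = Some a'.
  by move: Ea; rewrite -(subnK hs) oiterD Ec.
have Ecs' := (inv_k iB).1 Ecs.
exists (c, z2).
  apply/memS; exists (t' - s)%N; split => //=; first lia.
  have e1 : ((t' - s)%N : int) = t'%:Z - s%:Z by rewrite subzn.
  have e2 : (s : int) = n%:Z - (eps R i r' - phi B i a')%N%:Z by rewrite subzn // ltnW.
  move=> l; rewrite (wt_ek iR wR Ez2 l) Er e1 e2; ring.
apply/(inv_k iC).
rewrite /tpow -(subnKC (ltnW hnq)) -/s.
by rewrite (tens_e2 Aii iB wB iR wR Ez2) Ecs'.
Qed.
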